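(* For every integer $n\ge 1$, $a_n$ equals one plus the number of integer triples $(x,y,z)$ with $y,z\ge1$ and $x\ge 0$ satisfying $$n=2xyz+yz+x+y.$$ Moreover, $$a_n=1+\sum_{0\le j<n}D_{2j+1}(n-j).$$
   Context: For an integer $n\ge1$, $a_n$ denotes the number of integers $x$ with $0\le x\le n-1$ for which there exists a positive integer $h$ with $h\mid x$ and $(2x+1)\mid(2n-2h+1)$ (every positive integer divides $0$). For positive integers $m,N$, $D_m(N)$ denotes the number of positive divisors $d>1$ of $N$ with $d\equiv 1\pmod m$. *)

(* Defs.v *)
From mathcomp Require Import all_boot all_order all_algebra.
From mathcomp Require Import intdiv boolp.
Set Implicit Arguments. Unset Strict Implicit. Unset Printing Implicit Defensive.

Definition a_seq (n : nat) : nat :=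
  \sum_(x < n)
    asbool (exists h : nat, [/\ (0 < h)%N, (h %| x)%N &
       ((2 * x + 1)%:Z %| ((2 * n)%:Z - (2 * h)%:Z + 1)%R)%Z]).

Definition D (m N : nat) : nat :=
  count (fun d => (1 < d)%N && (d == 1 %[mod m])) (divisors N).

(* number of triples (x,y,z) of integers, x >= 0, y,z >= 1, with
   n = 2xyz + yz + x + y.  Every solution has x,y,z <= n, so the search
   over 'I_n.+1 ^3 is exhaustive. *)
Definition triples (n : nat) : nat :=
  #|[set t : 'I_n.+1 * 'I_n.+1 * 'I_n.+1 |
     let: (x, y, z) := t in
     [&& (0 < y)%N, (0 < z)%N &
        n == 2 * x * y * z + y * z + x + y]]|.

(* Main.v *)
Require Import Defs.
From mathcomp Require Import all_boot all_order all_algebra.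
From mathcomp Require Import intdiv boolp zify.
Set Implicit Arguments. Unset Strict Implicit.


Lemma sum_eq_ind (m k : nat) : (\sum_(x < m) (k == x :> nat) = (k < m))%N.
Proof.
elim: m => [|m IH]; first by rewrite big_ord0.
by rewrite big_ord_recr /= IH ltnS; case: ltngtP.
Qed.

Lemma fiber (T : finType) (A : pred T) (F : pred T) (b : bool) :
  (forall t t', A t -> A t' -> F t -> F t' -> t = t') ->
  (b -> exists t, A t && F t) -> ((exists t, A t && F t) -> b) ->
  (\sum_(t | A t) F t)%N = b.
Proof.
move=> U H1 H2; case: b H1 H2 => H1 H2.
  have [t0 /andP[At0 Ft0]] := H1 isT.
  rewrite (bigD1 t0) //= Ft0 big1 // => t /andP[At nt].
  case Ft: (F t) => //; by rewrite (U _ _ At At0 Ft Ft0) eqxx in nt.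
rewrite big1 // => t At; case Ft: (F t) => //.
by have := H2 (ex_intro _ t (introT andP (conj At Ft))).
Qed.

Lemma lin_cancel (X X' x : nat) : (2 * X * x + X = 2 * X' * x + X')%N -> X = X'.
Proof.
move=> H; case: (ltngtP X X') => // L; exfalso.
  have : (2 * X * x <= 2 * X' * x)%N by rewrite leq_mul2r leq_mul2l ltnW ?orbT.
  by clear -H L; lia.
have : (2 * X' * x <= 2 * X * x)%N by rewrite leq_mul2r leq_mul2l ltnW ?orbT.
by clear -H L; lia.
Qed.


Lemma count_div (N m : nat) (P : pred nat) : (0 < N)%N -> (N <= m)%N ->
  count P (divisors N) = (\sum_(d < m.+1) ((d %| N) && P d))%N.
Proof.
move=> N0 Nm.
have pe : perm_eq (divisors N) [seq d <- iota 0 m.+1 | d %| N].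
  apply: uniq_perm; first exact: divisors_uniq.
    by apply: filter_uniq; exact: iota_uniq.
  move=> d; rewrite mem_filter mem_iota -dvdn_divisors //.
  case dN: (d %| N) => //=; have := dvdn_leq N0 dN; clear -Nm; lia.
rewrite (permP pe) count_filter -sum1_count big_mkcond /=.
rewrite -[0 :: iota 1 m]/(index_iota 0 m.+1) big_mkord /=.
by apply: eq_bigr => d _; rewrite /predI /=; case: (d %| N); case: (P d).
Qed.

Section S.
Variable n : nat.

Definition good (x h : nat) : bool :=
  [&& (0 < h)%N, (h %| x)%N, (h <= x)%N & (2 * x + 1 %| 2 * n + 1 - 2 * h)%N].

Lemma idT X Y Z : (Y * ((2 * X + 1) * Z + 1) + X = 2 * X * Y * Z + Y * Z + X + Y)%N.
Proof. lia. Qed.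

Lemma idF a b : ((2 * a + 1) * (2 * b + 1) = 4 * (a * b) + 2 * a + 2 * b + 1)%N.
Proof. lia. Qed.

Lemma L_fwd X Y Z : (0 < Y)%N -> (0 < Z)%N -> n = 2 * X * Y * Z + Y * Z + X + Y ->
  good (Y * Z) Y && (Y * Z < n)%N.
Proof.
move=> Y0 Z0 E; rewrite /good.
have -> : (2 * n + 1 - 2 * Y = (2 * X + 1) * (2 * (Y * Z) + 1))%N.
  by rewrite E idF !mulnA; clear; lia.
rewrite Y0 dvdn_mulr // dvdn_mull //=.
rewrite leq_pmulr //=.
by rewrite E; clear E; lia.
Qed.

Lemma L_uniq x h1 h2 : good x h1 -> good x h2 -> (x < n)%N -> h1 = h2.
Proof.
wlog le12 : h1 h2 / (h1 <= h2)%N.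
  move=> W g1 g2 xn; case: (leqP h1 h2) => H; first exact: W.
  by symmetry; apply: W => //; exact: ltnW.
case/and4P=> p1 d1 l1 e1; case/and4P=> p2 d2 l2 e2 xn.
have : (2 * x + 1 %| (2 * n + 1 - 2 * h1) - (2 * n + 1 - 2 * h2))%N by rewrite dvdn_sub.
have -> : ((2 * n + 1 - 2 * h1) - (2 * n + 1 - 2 * h2) = 2 * (h2 - h1))%N.
  by clear -le12 l2 xn; lia.
rewrite Gauss_dvdr; last first.
  by rewrite coprimen2 oddD oddM.
move=> D; apply/eqP; rewrite eqn_leq le12 /=.
case: (posnP (h2 - h1)) => [E|P]; first by clear -E; lia.
have H := dvdn_leq P D; clear -H l2; lia.
Qed.

Lemma L_bwd x h : good x h -> (x < n)%N -> exists X Y Z,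
  [/\ (X <= n)%N, (Y <= n)%N, (Z <= n)%N, (0 < Y)%N & (0 < Z)%N] /\
   (n = 2 * X * Y * Z + Y * Z + X + Y /\ Y * Z = x).
Proof.
case/and4P=> p d l /dvdnP [u Eu] xn.
have xE : x = h * (x %/ h) by rewrite mulnC divnK.
move: (x %/ h) xE => Z xE; clear d; subst x.
have Z0 : (0 < Z)%N.
  case: Z l {Eu xn} => [|Z] // ; rewrite muln0 leqn0 => /eqP h0; by rewrite h0 in p.
have hn : (h <= n)%N by exact: leq_trans l (ltnW xn).
have uo : odd u.
  have : odd (2 * n + 1 - 2 * h).
    have -> : (2*n+1-2*h = 2*(n-h)+1)%N by clear -hn; lia.
    by rewrite addn1 /= oddM.
  by rewrite Eu oddM andbC => /andP[].
have uE : u = (2 * u./2 + 1)%N.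
  by move: (odd_double_half u); rewrite uo -muln2; clear; lia.
move: Eu; rewrite uE; move: (u./2) => X Eu; clear uE uo u.
have Zx : (Z <= h * Z)%N by apply: leq_pmull.
have Xn : (2 * X + 1 <= 2 * n + 1 - 2 * h)%N by rewrite Eu; apply: leq_pmulr; rewrite addn1.
exists X, h, Z; split.
  split => //; first (by clear -Xn hn; lia); clear -Zx xn; lia.
split=> //.
rewrite mulnC idF in Eu.
have -> : (2 * X * h * Z = 2 * (X * (h * Z)))%N by rewrite !mulnA.
move: Eu hn; move: (X * (h * Z))%N (h * Z)%N => P Q; clear; lia.
Qed.

Definition Qb (x : nat) : bool := [exists h : 'I_n.+1, good x h].

Lemma Qb0 : Qb 0 = false.
Proof. by apply/existsP => -[h]; rewrite /good; case/and4P => p _ l _; lia. Qed.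

Lemma term_eq (x : nat) : (x < n)%N ->
  nat_of_bool (asbool (exists h : nat, [/\ (0 < h)%N, (h %| x)%N &
       ((2 * x + 1)%:Z %| ((2 * n)%:Z - (2 * h)%:Z + 1)%R)%Z]))
  = ((x == 0%N) + Qb x)%N.
Proof.
move=> xn; case: (posnP x) => [->|x0].
  rewrite Qb0.
  have -> : asbool (exists h : nat, [/\ (0 < h)%N, (h %| 0)%N &
       ((2 * 0 + 1)%:Z %| ((2 * n)%:Z - (2 * h)%:Z + 1)%R)%Z]) = true.
    by apply/asboolP; exists 1%N; split => //; rewrite muln0 add0n dvd1z.
  by [].
rewrite (_ : nat_of_bool false = 0%N) // add0n; congr nat_of_bool.
apply/asboolP/existsP.
  case=> h [h0 hx hd].
  have hl : (h <= x)%N by exact: dvdn_leq.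
  have hn : (h < n.+1)%N by clear -hl xn; lia.
  exists (Ordinal hn); rewrite /good /= h0 hx hl /=.
  have E : ((2 * n)%:Z - (2 * h)%:Z + 1)%R = Posz (2 * n + 1 - 2 * h)%N.
    by clear -hl xn; lia.
  by move: hd; rewrite E.
case=> h; rewrite /good; case/and4P => h0 hx hl hd.
exists (nat_of_ord h); split => //.
have E : ((2 * n)%:Z - (2 * h)%:Z + 1)%R = Posz (2 * n + 1 - 2 * h)%N.
  by clear -hl xn; lia.
by rewrite E.
Qed.

Definition tcond (X Y Z : nat) : bool :=
  [&& (0 < Y)%N, (0 < Z)%N & n == 2 * X * Y * Z + Y * Z + X + Y].

Definition Aset := [set t : 'I_n.+1 * 'I_n.+1 * 'I_n.+1 |
     let: (x, y, z) := t in
     [&& (0 < y)%N, (0 < z)%N &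
        n == 2 * x * y * z + y * z + x + y]].

Lemma inA (X Y Z : 'I_n.+1) : ((X, Y, Z) \in Aset) = tcond X Y Z.
Proof. by rewrite inE. Qed.

Definition tX (t : 'I_n.+1 * 'I_n.+1 * 'I_n.+1) : nat := t.1.1.
Definition tY (t : 'I_n.+1 * 'I_n.+1 * 'I_n.+1) : nat := t.1.2.
Definition tZ (t : 'I_n.+1 * 'I_n.+1 * 'I_n.+1) : nat := t.2.

Lemma trip_eq (t t' : 'I_n.+1 * 'I_n.+1 * 'I_n.+1) :
  tX t = tX t' -> tY t = tY t' -> tZ t = tZ t' -> t = t'.
Proof.
case: t => [[X Y] Z]; case: t' => [[X' Y'] Z']; rewrite /tX /tY /tZ /= => e1 e2 e3.
by congr (_, _, _); apply: val_inj.
Qed.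

Lemma A2 : (#|Aset| = \sum_(x < n) Qb x)%N.
Proof.
rewrite -sum1_card.
rewrite (eq_bigr (fun t => \sum_(x < n) (tY t * tZ t == x :> nat))%N); last first.
  case=> [[X Y] Z]; rewrite inA /tcond => /and3P[Y0 Z0 /eqP E].
  rewrite sum_eq_ind /tY /tZ /=.
  by have /andP[_ ->] := L_fwd Y0 Z0 E.
rewrite exchange_big /=; apply: eq_bigr => x _.
apply: fiber.
- move=> t t'; cbv beta.
  case: t => [[X Y] Z]; case: t' => [[X' Y'] Z']; rewrite !inA /tcond /tY /tZ /=.
  case/and3P=> Y0 Z0 /eqP E; case/and3P=> Y0' Z0' /eqP E' /eqP e /eqP e'.
  have /andP[g xn] := L_fwd Y0 Z0 E.
  have /andP[g' _] := L_fwd Y0' Z0' E'.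
  rewrite e in g xn; rewrite e' in g'.
  have eY := L_uniq g g' xn.
  have eZ : (Z = Z' :> nat).
    by apply/eqP; rewrite -(eqn_pmul2l Y0) e eY e'.
  have eX : (X = X' :> nat).
    have E1 : (n = 2 * X * x + x + X + Y)%N by rewrite -e !mulnA.
    have E1' : (n = 2 * X' * x + x + X' + Y')%N by rewrite -e' !mulnA.
    rewrite eY in E1; apply: lin_cancel (_ : 2 * X * x + X = 2 * X' * x + X')%N.
    by clear -E1 E1'; lia.
  by apply: trip_eq.
- case/existsP => h /L_bwd /(_ (ltn_ord x)) [X [Y [Z [[Xn Yn Zn Y0 Z0] [E e]]]]].
  have Xn' : (X < n.+1)%N by clear -Xn; lia.
  have Yn' : (Y < n.+1)%N by clear -Yn; lia.
  have Zn' : (Z < n.+1)%N by clear -Zn; lia.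
  exists (Ordinal Xn', Ordinal Yn', Ordinal Zn').
  by cbv beta; rewrite inA /tcond /tY /tZ /= Y0 Z0 e eqxx andbT /= -e; apply/eqP.
- case=> -[[X Y] Z]; cbv beta; rewrite inA /tcond /tY /tZ /=.
  case/andP=> /and3P[Y0 Z0 /eqP E] /eqP e.
  have /andP[g _] := L_fwd Y0 Z0 E.
  by apply/existsP; exists Y; rewrite -e.
Qed.

Definition dd (t : 'I_n.+1 * 'I_n.+1 * 'I_n.+1) : nat := ((2 * tX t + 1) * tZ t + 1)%N.

Lemma A3 : (#|Aset| = \sum_(j < n) D (2 * j + 1) (n - j))%N.
Proof.
rewrite -sum1_card.
rewrite (eq_bigr (fun t => \sum_(j < n) (tX t == j :> nat))%N); last first.
  case=> [[X Y] Z]; rewrite inA /tcond => /and3P[Y0 Z0 /eqP E].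
  by rewrite sum_eq_ind /tX /=; clear -E Y0; lia.
rewrite exchange_big /=; apply: eq_bigr => j _.
rewrite (eq_bigr (fun t => \sum_(d < n.+1) ((tX t == j) && (dd t == d)) )%N); last first.
  move=> t At.
  rewrite (eq_bigr (fun d : 'I_n.+1 => (tX t == j) * (dd t == d :> nat)))%N; last first.
    by move=> d _; rewrite mulnb.
  rewrite -big_distrr /= sum_eq_ind.
  suff -> : (dd t < n.+1)%N by rewrite muln1.
  move: At; case: t => [[X Y] Z]; rewrite inA /tcond /dd /tX /tZ /= => /and3P[Y0 Z0 /eqP E].
  rewrite ltnS; rewrite -idT in E.
  apply: leq_trans (eq_leq (esym E)); apply: leq_trans (leq_addr _ _); exact: leq_pmull.
rewrite exchange_big /=.
have jn : (0 < n - j)%N by rewrite subn_gt0.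
rewrite /D (count_div _ jn (leq_subr j n)).
apply: eq_bigr => d _.
apply: fiber.
- move=> t t'; cbv beta.
  case: t => [[X Y] Z]; case: t' => [[X' Y'] Z']; rewrite !inA /tcond /tX /dd /tX /tZ /=.
  case/and3P=> Y0 Z0 /eqP E; case/and3P=> Y0' Z0' /eqP E' /andP[/eqP eX /eqP e] /andP[/eqP eX' /eqP e'].
  rewrite -idT e eX in E; rewrite -idT e' eX' in E'.
  have eZ : (Z = Z' :> nat).
    apply/eqP; rewrite -(eqn_pmul2l (_ : (0 < 2 * j + 1)%N)); last by rewrite addn1.
    rewrite -(eqn_add2r 1); apply/eqP.
    by rewrite -[in LHS]eX -[in RHS]eX' e e'.
  have d0 : (0 < d)%N by rewrite -e addn1.
  have eY : (Y = Y' :> nat).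
    apply/eqP; rewrite -(eqn_pmul2r d0) -(eqn_add2r j); apply/eqP; by rewrite -E -E'.
  by apply: trip_eq; rewrite /tX /tY /tZ //= eX eX'.
- case/andP => /dvdnP [Y EY] /andP[d1 dm].
  rewrite eqn_mod_dvd in dm; last by clear -d1; lia.
  case/dvdnP: dm => Z EZ.
  have d0 : (0 < d)%N by clear -d1; lia.
  have Y0 : (0 < Y)%N by case: Y EY jn => [|Y] //; rewrite mul0n => ->.
  have Z0 : (0 < Z)%N by case: Z EZ d1 => [|Z] //; rewrite mul0n; clear; lia.
  have dn : (d <= n - j)%N by apply: dvdn_leq => //; rewrite EY dvdn_mull.
  have Yn : (Y <= n - j)%N by rewrite EY; apply: leq_pmulr.
  have Zd : (Z <= d - 1)%N by rewrite EZ; apply: leq_pmulr; rewrite addn1.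
  have Xn' : (j < n.+1)%N by exact: leq_trans (ltn_ord j) (leqnSn n).
  have Yn' : (Y < n.+1)%N by clear -Yn; lia.
  have Zn' : (Z < n.+1)%N by clear -Zd dn d0; lia.
  exists (Ordinal Xn', Ordinal Yn', Ordinal Zn').
  cbv beta; rewrite inA /tcond /tX /dd /tZ /= Y0 Z0 eqxx /= -idT.
  have -> : ((2 * j + 1) * Z + 1 = d)%N by rewrite [(2 * j + 1) * Z]mulnC -EZ; clear -d1; lia.
  by rewrite -EY; apply/eqP; clear -jn; lia.
- case=> -[[X Y] Z]; cbv beta; rewrite inA /tcond /tX /dd /tZ /=.
  case/andP=> /and3P[Y0 Z0 /eqP E] /andP[/eqP eX /eqP e].
  rewrite -idT e eX in E.
  have -> : (n - j = Y * d)%N by clear -E; lia.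
  rewrite dvdn_mull //= -e /tX /=.
  rewrite eqn_mod_dvd; last by rewrite addn1.
  rewrite addnK eX dvdn_mulr // andbT.
  by rewrite -{1}[1%N]add0n ltn_add2r muln_gt0 addn1 Z0.
Qed.
End S.

Unset Implicit Arguments.

Theorem theorem11 (n : nat) : (1 <= n)%N ->
  a_seq n = (1 + triples n)%N /\
  a_seq n = (1 + \sum_(0 <= j < n) D (2 * j + 1) (n - j))%N.
Proof.
move=> n0.
have Ha : a_seq n = (1 + \sum_(x < n) Qb n x)%N.
  rewrite /a_seq (eq_bigr (fun x : 'I_n => ((nat_of_ord x == 0%N) + Qb n x)%N)); last first.
    by move=> x _; apply: term_eq.
  rewrite big_split /=; congr (_ + _)%N.
  rewrite (eq_bigr (fun x : 'I_n => (0%N == x :> nat) : nat)); last by move=> x _; rewrite eq_sym.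
  by rewrite sum_eq_ind n0.
have Ht : triples n = #|Aset n| by [].
rewrite big_mkord Ha Ht -A2 -A3; split => //.
Qed.
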